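(* There is an absolute constant $C>0$ such that for every power $q$ of an odd prime, every $d\ge 2$, and every $A\subset\mathbb{F}_q^d$ with $|A|\ge C q^{\frac{d+2}{3}}$, there exist $x,y,z\in A$ such that $(x,y,z)$ forms a right angle.
   Context: For $u,v\in\mathbb{F}_q^d$, $u\cdot v=\sum_{i=1}^d u_iv_i$. An ordered triple $(x,y,z)\in(\mathbb{F}_q^d)^3$ forms a right angle if $x,y,z$ are pairwise distinct and $(x-y)\cdot(z-y)=0$. *)

(* Defs.v *)
From HB Require Import structures.
From mathcomp Require Import all_boot all_order all_algebra all_field.
Set Implicit Arguments. Unset Strict Implicit. Unset Printing Implicit Defensive.
Import Order.TTheory GRing.Theory Num.Theory.
Local Open Scope ring_scope.

Definition dotp (F : fieldType) (d : nat) (u v : 'rV[F]_d) : F :=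
  \sum_(i < d) u 0 i * v 0 i.

Definition right_angle (F : fieldType) (d : nat) (x y z : 'rV[F]_d) : bool :=
  [&& x != y, y != z, x != z & dotp (x - y) (z - y) == 0].

(* Main.v *)
Require Import Defs.
From HB Require Import structures.
From mathcomp Require Import all_boot all_order all_algebra all_field.
From mathcomp Require Import ring lra.
Import Order.TTheory GRing.Theory Num.Theory.
Local Open Scope ring_scope.
Set Implicit Arguments. Unset Strict Implicit.

Lemma dotpDr (F : fieldType) d (n z w : 'rV[F]_d) : dotp n (z + w) = dotp n z + dotp n w.
Proof. rewrite /dotp -big_split /=; apply: eq_bigr => i _; by rewrite mxE mulrDr. Qed.
Lemma dotpZr (F : fieldType) d (n w : 'rV[F]_d) a : dotp n (a *: w) = a * dotp n w.
Proof. rewrite /dotp mulr_sumr; apply: eq_bigr => i _; by rewrite mxE mulrCA. Qed.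
Lemma dotpNr (F : fieldType) d (n w : 'rV[F]_d) : dotp n (- w) = - dotp n w.
Proof. by rewrite -scaleN1r dotpZr mulN1r. Qed.
Lemma dotpBr (F : fieldType) d (n z w : 'rV[F]_d) : dotp n (z - w) = dotp n z - dotp n w.
Proof. by rewrite dotpDr dotpNr. Qed.
Lemma dotpZl (F : fieldType) d (n w : 'rV[F]_d) a : dotp (a *: n) w = a * dotp n w.
Proof. rewrite /dotp mulr_sumr; apply: eq_bigr => i _; by rewrite mxE mulrA. Qed.
Lemma dotp_delta (F : fieldType) d (n : 'rV[F]_d) i : dotp n (delta_mx 0 i) = n 0 i.
Proof.
rewrite /dotp (bigD1 i) //= big1 ?addr0; first by rewrite mxE !eqxx mulr1.
by move=> j /negbTE ji; rewrite mxE ji andbF mulr0.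
Qed.
Lemma dotp_nz (F : fieldType) d (n : 'rV[F]_d) : n != 0 -> exists w, dotp n w != 0.
Proof.
move=> nz; have [i ni] : exists i, n 0 i != 0.
  apply/existsP; apply: contraNT nz; rewrite negb_exists => /forallP H.
  apply/eqP/matrixP => a j; rewrite mxE ord1; exact/eqP/negbNE/H.
by exists (delta_mx 0 i); rewrite dotp_delta.
Qed.
Lemma dotp_prop (F : fieldType) d (n n' : 'rV[F]_d) : n != 0 ->
  (forall w, dotp n w = 0 -> dotp n' w = 0) -> exists l, n' = l *: n.
Proof.
move=> nz H; have [i ni] : exists i, n 0 i != 0.
  apply/existsP; apply: contraNT nz; rewrite negb_exists => /forallP K.
  apply/eqP/matrixP => a j; rewrite mxE ord1; exact/eqP/negbNE/K.
exists (n' 0 i / n 0 i); apply/matrixP => a j; rewrite ord1 mxE.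
have := H (n 0 i *: delta_mx 0 j - n 0 j *: delta_mx 0 i).
rewrite !dotpBr !dotpZr !dotp_delta mulrC subrr => /(_ erefl) /eqP.
rewrite subr_eq0 => /eqP E.
apply: (mulfI ni); rewrite E; field; exact: ni.
Qed.
Lemma fiber_card (F : finFieldType) d (K : {set 'rV[F]_d}) (phi : 'rV[F]_d -> F) w :
  (forall z v, z \in K -> v \in K -> z + v \in K) -> (forall a z, z \in K -> a *: z \in K) ->
  (forall z v a, phi (z + a *: v) = phi z + a * phi v) -> w \in K -> phi w != 0 ->
  forall c, (#|[set z in K | phi z == c]| * #|F|)%N = #|K|.
Proof.
move=> KD KZ phiL wK pw.
have fib : forall c, #|[set z in K | phi z == c]| = #|[set z in K | phi z == 0]|.
  move=> c; set t := c / phi w.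
  have -> : [set z in K | phi z == c] = [set z + t *: w | z in [set z in K | phi z == 0]].
    apply/setP => z; rewrite inE; apply/andP/imsetP.
      move=> [zK /eqP pz]; exists (z + (- t) *: w); last by rewrite -addrA -scalerDl addNr scale0r addr0.
      rewrite inE KD ?KZ //= phiL pz /t mulNr divfK // subrr eqxx //.
    move=> [v]; rewrite inE => /andP[vK /eqP pv] ->; split; first by rewrite KD ?KZ.
    by rewrite phiL pv add0r /t divfK.
  by rewrite card_imset //; apply: addIr.
move=> c; rewrite mulnC.
have -> : #|K| = (\sum_(c : F) #|[set z in K | phi z == c]|)%N.
  rewrite -sum1_card (partition_big phi xpredT) //=; apply: eq_bigr => c0 _.
  by rewrite -sum1_card; apply: eq_bigl => z; rewrite inE.
rewrite (eq_bigr _ (fun c0 _ => fib c0)) sum_nat_const fib cardT //.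
Qed.

Definition nv (F : fieldType) d (p : 'rV[F]_d * 'rV[F]_d) := p.1 - p.2.
Definition Hp (F : finFieldType) d (p : 'rV[F]_d * 'rV[F]_d) :=
  [set z | dotp (nv p) z == dotp (nv p) p.2].

Lemma card_hyp (F : finFieldType) d (n : 'rV[F]_d) c : n != 0 ->
  (#|[set z | dotp n z == c]| * #|F|)%N = (#|F| ^ d)%N.
Proof.
move=> nz; have [w pw] := dotp_nz nz.
have L : forall z v a, dotp n (z + a *: v) = dotp n z + a * dotp n v.
  by move=> z v a; rewrite dotpDr dotpZr.
have := @fiber_card F d [set: 'rV[F]_d] (dotp n) w.
move=> /(_ (fun _ _ _ _ => in_setT _) (fun _ _ _ => in_setT _) L (in_setT _) pw c).
rewrite cardsT card_mx mul1n => E; rewrite -E; congr (_ * _)%N; apply: eq_card => z; by rewrite !inE.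
Qed.

Lemma card_Hp (F : finFieldType) d (p : 'rV[F]_d * 'rV[F]_d) : p.1 != p.2 ->
  (#|Hp p| * #|F|)%N = (#|F| ^ d)%N.
Proof. by move=> ne; apply: card_hyp; rewrite /nv subr_eq0. Qed.

Lemma card_HH (F : finFieldType) d (p p' : 'rV[F]_d * 'rV[F]_d) : p.1 != p.2 ->
  ~ (exists l, nv p' = l *: nv p) -> (#|Hp p :&: Hp p'| * #|F| * #|F| <= #|F| ^ d)%N.
Proof.
move=> ne np; set n := nv p; set n' := nv p'.
have nz : n != 0 by rewrite /n /nv subr_eq0.
set K0 := [set z | dotp n z == 0].
set K1 := [set z in K0 | dotp n' z == 0].
have [w /andP[wK0 wn]] : exists w, (w \in K0) && (dotp n' w != 0).
  apply/existsP; case: (boolP [exists w, (w \in K0) && (dotp n' w != 0)]) => // .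
  rewrite negb_exists => /forallP H; case: np.
  apply: dotp_prop => // v /eqP nv0; apply/eqP; have := H v; rewrite inE nv0 /=.
  by rewrite negbK.
have E1 : (#|K1| * #|F|)%N = #|K0|.
  apply: (@fiber_card F d K0 (dotp n') w) => //.
  - by move=> z v; rewrite !inE dotpDr => /eqP -> /eqP ->; rewrite addr0.
  - by move=> a z; rewrite !inE dotpZr => /eqP ->; rewrite mulr0.
  - by move=> z v a; rewrite dotpDr dotpZr.
have E0 := card_hyp 0 nz; rewrite -/K0 in E0.
have le1 : (#|Hp p :&: Hp p'| <= #|K1|)%N.
  have [->|[z0 z0H]] := set_0Vmem (Hp p :&: Hp p'); first by rewrite cards0.
  rewrite -(card_imset _ (addIr (- z0))); apply: subset_leq_card.
  apply/subsetP => _ /imsetP[z zH ->]; move: zH z0H; rewrite !inE.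
  move=> /andP[/eqP h1 /eqP h2] /andP[/eqP g1 /eqP g2].
  by rewrite !dotpBr h1 g1 h2 g2 !subrr !eqxx.
rewrite -E0 -E1 -mulnA -[X in (_ <= X)%N]mulnA leq_mul2r le1 orbT //.
Qed.

Definition Pset (F : finFieldType) d (A : {set 'rV[F]_d}) :=
  [set p : 'rV[F]_d * 'rV[F]_d | [&& p.1 \in A, p.2 \in A & p.1 != p.2]].
Definition Rset (F : finFieldType) d (A : {set 'rV[F]_d}) (p : 'rV[F]_d * 'rV[F]_d) :=
  [set p' in Pset A | (p'.2 \in A :&: Hp p) && [exists l : F, p'.1 == p'.2 + l *: nv p]].

Lemma AH_le2 (F : finFieldType) d (A : {set 'rV[F]_d}) p :
  (forall x y z, x \in A -> y \in A -> z \in A -> ~~ right_angle x y z) ->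
  p \in Pset A -> (#|A :&: Hp p| <= 2)%N.
Proof.
move=> RA; rewrite inE => /and3P[xA yA ne].
apply: (@leq_trans #|[set p.1; p.2]|); last by rewrite cards2 ne.
apply/subset_leq_card/subsetP => z; rewrite !inE => /andP[zA /eqP zH].
apply/negPn/negP; rewrite negb_or => /andP[n1 n2].
move: (RA _ _ _ xA yA zA); rewrite /right_angle ne eq_sym n2 eq_sym n1 /=.
by rewrite dotpBr -/(nv p) zH subrr eqxx.
Qed.

Lemma card_R (F : finFieldType) d (A : {set 'rV[F]_d}) p :
  (#|Rset A p| <= #|A :&: Hp p| * #|F|)%N.
Proof.
rewrite -cardsT -cardsX.
apply: (leq_trans _ (leq_imset_card (fun u => (u.1 + u.2 *: nv p, u.1)) _)).
apply/subset_leq_card/subsetP => p'; rewrite inE => /andP[_ /andP[p2 /existsP[l /eqP e]]].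
apply/imsetP; exists (p'.2, l); first by rewrite inE p2 in_setT.
by rewrite /= -e; case: p' {p2 e}.
Qed.

Lemma pair_bound (F : finFieldType) d (A : {set 'rV[F]_d}) p p' :
  p \in Pset A -> p' \in Pset A ->
  (#|Hp p :&: Hp p'| * #|F| * #|F| <= #|F| ^ d + #|F| ^ d * #|F| * (p' \in Rset A p))%N.
Proof.
move=> pP p'P.
have /and3P[xA yA ne] : [&& p.1 \in A, p.2 \in A & p.1 != p.2] by rewrite inE in pP.
have /and3P[xA' yA' ne'] : [&& p'.1 \in A, p'.2 \in A & p'.1 != p'.2] by rewrite inE in p'P.
case: (boolP [exists l : F, nv p' == l *: nv p]) => [/existsP[l /eqP e]|nex]; last first.
  apply: leq_trans (leq_addr _ _); apply: card_HH => // -[l e].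
  by move/negP: nex; apply; apply/existsP; exists l; rewrite e.
have [->|[w wH]] := set_0Vmem (Hp p :&: Hp p'); first by rewrite cards0.
have inR : p' \in Rset A p.
  rewrite /Rset inE p'P /= !inE yA' /=; move: wH; rewrite !inE => /andP[/eqP h1 /eqP h2].
  have l0 : l != 0.
    by apply: contra ne' => /eqP l0; move: e; rewrite l0 scale0r /nv => /eqP; rewrite subr_eq0.
  move: h2; rewrite e !dotpZl => /(mulfI l0) h2; rewrite -h2 h1 eqxx /=.
  apply/existsP; exists l; by rewrite -e /nv addrC subrK.
rewrite inR muln1; apply: leq_trans (leq_addl _ _).
rewrite -(card_Hp ne) leq_mul2r leq_mul2r; apply/orP; right; apply/orP; right.
by apply/subset_leq_card/subsetIl.
Qed.
Lemma CS (T : finType) (A : {set T}) (f : T -> rat) :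
  (\sum_(z in A) f z) ^+ 2 <= #|A|%:R * \sum_(z in A) f z ^+ 2.
Proof.
case: (posnP #|A|) => [A0|Apos].
  have -> : A = set0 by apply/eqP; rewrite -cards_eq0 A0.
  by rewrite !big_set0 cards0 expr2 !mul0r.
set S := \sum_(z in A) f z; set k : rat := #|A|%:R.
have H : 0 <= \sum_(z in A) (k * f z - S) ^+ 2 by apply: sumr_ge0 => z _; exact: sqr_ge0.
have E : \sum_(z in A) (k * f z - S) ^+ 2 = k * (k * \sum_(z in A) f z ^+ 2 - S ^+ 2).
  rewrite (eq_bigr (fun z => k ^+ 2 * f z ^+ 2 - (2 * k * S) * f z + S ^+ 2)); last first.
    by move=> z _; ring.
  rewrite !big_split /= sumrN -!mulr_sumr sumr_const -/S -/k -mulr_natr; ring.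
by move: H; rewrite E pmulr_rge0 ?ltr0n // subr_ge0.
Qed.

Lemma sum_sub_le (T : finType) (A : {set T}) (f : T -> rat) :
  (forall z, 0 <= f z) -> \sum_(z in A) f z <= \sum_z f z.
Proof.
move=> f0; rewrite [X in _ <= X](bigID (fun z => z \in A)) /= lerDl.
by apply: sumr_ge0.
Qed.

Lemma sum_ind (T : finType) (B C : {set T}) :
  (\sum_(z in B) (z \in C : nat))%N = #|B :&: C|.
Proof.
rewrite -sum1_card (big_mkcond (fun z => z \in B :&: C)) /= big_mkcond /=.
by apply: eq_bigr => z _; rewrite inE; case: (z \in B); case: (z \in C).
Qed.
Lemma sum_ind_all (T : finType) (C : {set T}) :
  (\sum_z (z \in C : nat))%N = #|C|.
Proof. by rewrite -sum1_card [RHS]big_mkcond /=; apply: eq_bigr => z _; case: (z \in C). Qed.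

Lemma final_arith (a P q Q SA ST SQ : rat) :
 0 <= SA -> SA <= 2*P -> q * ST = P * Q -> q^+2 * SQ <= P^+2*Q + 2*q^+2*Q*P ->
 (q*SA - a*P)^+2 <= a * (q^+2*SQ - 2*q*P*ST + Q*P^+2) ->
 a^+2 - a <= P -> 64*q^+2*Q <= a^+3 -> q <= Q -> 2 <= q -> 0 <= a -> False.
Proof.
move=> SA0 hSA hST hSQ hCS hP hA qQ q2 a0.
have e : 2*q*P*ST = 2*P*(P*Q) by rewrite -hST; ring.
have V : q^+2*SQ - 2*q*P*ST + Q*P^+2 <= 2*q^+2*Q*P by rewrite e; lra.
have a4q : 4*q <= a.
  rewrite leNgt; apply/negP => h.
  have h1 : a^+3 < (4*q)^+3 by rewrite ltrXn2r //; lra.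
  have h2 : q^+3 <= q^+2 * Q by rewrite exprSr ler_wpM2l // exprn_ge0 //; lra.
  lra.
have Ppos : 0 < P by nra.
have X : q*SA - a*P <= - (a*P/2) by nra.
have X2 : (a*P/2)^+2 <= (q*SA - a*P)^+2.
  have h0 : 0 <= a*P/2 by nra.
  rewrite !expr2; nra.
have Q0 : 0 <= Q by lra.
have h3 : (a*P/2)^+2 <= a * (2*q^+2*Q*P) by apply: (le_trans X2); apply: (le_trans hCS); apply: ler_wpM2l.
have h4 : a*P/4 <= 2*q^+2*Q.
  have aP : 0 < a*P by nra.
  rewrite -(ler_pM2l aP); move: h3; rewrite expr2 => h3; nra.
nra.
Qed.

Lemma sums_nat (F : finFieldType) d (A : {set 'rV[F]_d}) :
  (forall x y z, x \in A -> y \in A -> z \in A -> ~~ right_angle x y z) ->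
  let P := Pset A in
  let h := fun z => (\sum_(p in P) (z \in Hp p : nat))%N in
  [/\ (\sum_(z in A) h z <= 2 * #|P|)%N,
      (\sum_z h z * #|F| = #|P| * #|F| ^ d)%N &
      (\sum_z (h z * h z) * #|F| * #|F| <= #|P| * #|P| * #|F| ^ d + #|F| ^ d * #|F| * (#|P| * (2 * #|F|)))%N].
Proof.
move=> RA P h; split.
- rewrite /h /= exchange_big /= (eq_bigr (fun p => #|A :&: Hp p|)); last by move=> p _; rewrite sum_ind.
  rewrite mulnC -sum_nat_const; apply: leq_sum => p pP; exact: AH_le2.
- rewrite /h /= -big_distrl /= exchange_big /= big_distrl /= -sum_nat_const; apply: eq_bigr => p pP.
  rewrite sum_ind_all card_Hp //; move: pP; rewrite inE => /and3P[] //.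
- have E : (\sum_z (h z * h z) = \sum_(p in P) \sum_(p' in P) #|Hp p :&: Hp p'|)%N.
    rewrite /h /=.
    rewrite (eq_bigr (fun z => \sum_(p in P) \sum_(p' in P) ((z \in Hp p) * (z \in Hp p'))%N)); last first.
      by move=> z _; rewrite big_distrl /=; apply: eq_bigr => p0 _; rewrite big_distrr.
    rewrite exchange_big /=; apply: eq_bigr => p1 _; rewrite exchange_big /=; apply: eq_bigr => p2 _.
    rewrite -sum_ind_all; apply: eq_bigr => z _; rewrite in_setI; by case: (z \in Hp p1); case: (z \in Hp p2).
  have B : forall p, p \in P ->
      (\sum_(p' in P) (#|Hp p :&: Hp p'| * #|F| * #|F|) <= #|P| * #|F| ^ d + #|F| ^ d * #|F| * (2 * #|F|))%N.
    move=> pp ppP.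
    have L1 : (\sum_(p' in P) (#|Hp pp :&: Hp p'| * #|F| * #|F|) <= \sum_(p' in P) (#|F| ^ d + #|F| ^ d * #|F| * (p' \in Rset A pp)))%N.
      by apply: leq_sum => p' p'P; exact: pair_bound ppP p'P.
    apply: (leq_trans L1).
    rewrite big_split /= sum_nat_const -big_distrr /= leq_add2l leq_mul2l; apply/orP; right.
    rewrite sum_ind; apply: (leq_trans (subset_leq_card (subsetIr _ _))).
    apply: (leq_trans (card_R A pp)); rewrite leq_mul2r; apply/orP; right; exact: AH_le2.
  rewrite -big_distrl -big_distrl /= E big_distrl big_distrl /=.
  apply: (leq_trans (n := (\sum_(p in P) (#|P| * #|F| ^ d + #|F| ^ d * #|F| * (2 * #|F|)))%N)).
    apply: leq_sum => p0 p0P; rewrite big_distrl big_distrl /=; exact: B.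
  rewrite sum_nat_const; apply: eq_leq; rewrite mulnDr; congr (_ + _)%N.
    by rewrite mulnA.
  by rewrite mulnCA.
Qed.

Lemma card_P (F : finFieldType) d (A : {set 'rV[F]_d}) :
  (#|A| * #|A| <= #|Pset A| + #|A|)%N.
Proof.
rewrite -cardsX; apply: (leq_trans (n := #|Pset A :|: [set (x, x) | x in A]|)).
  apply/subset_leq_card/subsetP => -[x y]; rewrite !inE /= => /andP[xA yA].
  case: (eqVneq x y) => [<-|ne]; last by rewrite xA yA.
  by apply/orP; right; apply/imsetP; exists x.
apply: (leq_trans (leq_card_setU _ _)); rewrite leq_add2l; exact: leq_imset_card.
Qed.

Theorem corollary2p3 :
  exists C : rat, 0 < C /\
    forall (F : finFieldType), odd #|F| ->
    forall (d : nat), (2 <= d)%N ->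
    forall (A : {set 'rV[F]_d}),
      C ^+ 3 * ((#|F| ^ (d + 2))%N)%:R <= (#|A|%:R) ^+ 3 ->
      exists x y z, [/\ x \in A, y \in A, z \in A & right_angle x y z].
Proof.
exists 4; split; first by [].
move=> F _ d d2 A hA.
case: (boolP [exists x, [exists y, [exists z, [&& x \in A, y \in A, z \in A & right_angle x y z]]]]).
  move=> /existsP[x /existsP[y /existsP[z /and4P[xA yA zA r]]]]; by exists x, y, z.
move=> H; exfalso.
have RA : forall x y z, x \in A -> y \in A -> z \in A -> ~~ right_angle x y z.
  move=> x y z xA yA zA; apply/negP => r; move/negP: H; apply.
  apply/existsP; exists x; apply/existsP; exists y; apply/existsP; exists z; by rewrite xA yA zA r.
have [hSA hST hSQ] := sums_nat RA.
rewrite -big_distrl /= in hST; rewrite -big_distrl -big_distrl /= in hSQ.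
move: hSA hST hSQ.
set P := Pset A; set h := fun z => (\sum_(p in P) (z \in Hp p : nat))%N.
move=> hSA hST hSQ.
set q : rat := #|F|%:R; set Q : rat := (#|F| ^ d)%:R; set a : rat := #|A|%:R.
set Pr : rat := #|P|%:R.
set SA := (\sum_(z in A) h z)%N; set ST := (\sum_z h z)%N; set SQ := (\sum_z (h z * h z))%N.
apply: (@final_arith a Pr q Q SA%:R ST%:R SQ%:R).
- exact: ler0n.
- by rewrite -natrM ler_nat.
- by rewrite /q /Pr /Q -!natrM mulnC hST.
- have := hSQ; rewrite -(ler_nat rat) !natrD !natrM -/q -/Q -/Pr => H2.
  rewrite !expr2; lra.
- pose G := fun z => q * (h z)%:R - Pr.
  have cs := @CS _ A G.
  have le := @sum_sub_le _ A (fun z => G z ^+ 2) (fun z => sqr_ge0 (G z)).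
  have e1 : \sum_(z in A) G z = q * SA%:R - a * Pr.
    by rewrite /G sumrB -mulr_sumr /SA natr_sum sumr_const -mulr_natl.
  have e2 : \sum_z G z ^+ 2 = q^+2 * SQ%:R - 2*q*Pr*ST%:R + Q*Pr^+2.
    rewrite (eq_bigr (fun z => q^+2 * (h z * h z)%:R - (2*q*Pr) * (h z)%:R + Pr^+2)); last first.
      by move=> z _; rewrite /G natrM; ring.
    rewrite big_split /= sumrB -!mulr_sumr /SQ /ST !natr_sum sumr_const.
    rewrite (_ : #|_| = #|F| ^ d)%N; last by rewrite card_mx mul1n.
    rewrite -mulr_natr -/Q; ring.
  rewrite -e1 -e2; apply: (le_trans cs); apply: ler_wpM2l => //; exact: ler0n.
- have := card_P A; rewrite -/P -(ler_nat rat) natrD !natrM -/a -/Pr => H2.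
  rewrite expr2; lra.
- move: hA; rewrite expnD natrM -/Q natrX -/q -/a => H2.
  have -> : (64 : rat) = 4 ^+ 3 by rewrite !exprS expr0; lra.
  by rewrite -mulrA [q ^+ 2 * Q]mulrC.
- rewrite /q /Q ler_nat -{1}(expn1 #|F|) leq_pexp2l //; last by apply: (leq_trans _ d2).
  exact: (leq_trans _ (card_finNzRing_gt1 F)).
- by rewrite /q (ler_nat rat 2) card_finNzRing_gt1.
- exact: ler0n.
Qed.
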